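(* Let $\beta\in(0,1)$, $\mu\ge0$, $\eta>0$, $\zeta=\frac{\beta}{1+\eta\mu}$. In the general conversion scheme below with online learner $\Delta_1=\mathbf{0}$, $\Delta_{t+1}=\zeta(\Delta_t-\eta\mathbf{g}_t)$, and with the choice $\mathbf{x}_t=\mathbf{x}_{t-1}+\frac1\zeta\Delta_t$, define $\mathbf{z}_t:=\mathbf{x}_t+\frac{1}{1-\zeta}\Delta_t$. Then for every $t$, $$\mathbf{z}_{t+1}-\mathbf{z}_t=-\frac{\eta}{1-\zeta}\mathbf{g}_t.$$
   Context: General conversion scheme: input $\mathbf{x}_0=\mathbf{w}_0\in\mathbb{R}^d$, $T$, $\mu\ge0$, online learner $\mathcal{A}$. For $t=1,\dots,T$: receive $\Delta_t$ from $\mathcal{A}$; choose $\mathbf{x}_t$; $\mathbf{w}_t=\mathbf{x}_t+\Delta_t$; $\mathbf{y}_t=\mathbf{x}_t+s_t\Delta_t$ with $s_t\sim\mathrm{Unif}[0,1]$ i.i.d.; $\mathbf{g}_t$ is a stochastic gradient of the objective at $\mathbf{y}_t$; send the loss $\ell_t(\mathbf{v})=\langle\mathbf{g}_t,\mathbf{v}\rangle+\frac\mu2\|\mathbf{v}\|^2$ to $\mathcal{A}$. *)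

(* Defs.v *)
From mathcomp Require Import all_boot all_order all_algebra.
Set Implicit Arguments. Unset Strict Implicit. Unset Printing Implicit Defensive.
Import Order.TTheory GRing.Theory Num.Theory.
Local Open Scope ring_scope.

Definition zeta_of (R : realFieldType) (beta mu eta : R) : R :=
  beta / (1 + eta * mu).

Definition z_seq (R : realFieldType) (d : nat) (zeta : R)
  (x Delta : nat -> 'rV[R]_d) (t : nat) : 'rV[R]_d :=
  x t + (1 - zeta)^-1 *: Delta t.

(* Main.v *)
Require Import Defs.
From mathcomp Require Import all_boot all_order all_algebra.
From mathcomp Require Import ring lra.
Import Order.TTheory GRing.Theory Num.Theory.
Local Open Scope ring_scope.

Theorem proposition2 (R : realFieldType) (d : nat) (beta mu eta : R)
  (g Delta x : nat -> 'rV[R]_d) :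
  0 < beta -> beta < 1 -> 0 <= mu -> 0 < eta ->
  Delta 1%N = 0 ->
  (forall t : nat, (1 <= t)%N ->
     Delta t.+1 = zeta_of beta mu eta *: (Delta t - eta *: g t)) ->
  (forall t : nat, (1 <= t)%N ->
     x t = x t.-1 + (zeta_of beta mu eta)^-1 *: Delta t) ->
  forall t : nat, (1 <= t)%N ->
    z_seq (zeta_of beta mu eta) x Delta t.+1 - z_seq (zeta_of beta mu eta) x Delta t
    = - (eta / (1 - zeta_of beta mu eta)) *: g t.
Proof.
move=> b0 b1 m0 e0 _ HD Hx t t1.
have hp : 1 <= 1 + eta * mu by rewrite lerDl mulr_ge0 // ltW.
have hp0 : 0 < 1 + eta * mu by apply: lt_le_trans hp.
set z := zeta_of beta mu eta.
have z0 : z != 0 by rewrite /z /zeta_of mulf_neq0 // ?invr_eq0 gt_eqF.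
have z1 : 1 - z != 0.
  rewrite subr_eq0 eq_sym /z /zeta_of; apply/negP => /eqP E.
  have : beta < 1 + eta * mu by apply: lt_le_trans hp.
  by rewrite -[beta](@divfK _ (1 + eta * mu)) ?gt_eqF // E mul1r ltxx.
rewrite /z_seq (Hx t.+1 isT) (HD t t1) /= scalerA mulVf // scale1r.
set c := (1 - z)^-1.
set D := Delta t; set G := g t.
have -> : x t + (D - eta *: G) + c *: (z *: (D - eta *: G)) - (x t + c *: D)
   = (1 + c * z - c) *: D + (- eta - c * z * eta) *: G.
  rewrite !scalerDr !scalerN !scalerA !scalerDl !scaleNr !scale1r.
  move: (x t) (eta *: G) (_ *: D) (_ *: G) (c *: D) => X E P Q C.
  rewrite opprD !addrA.
  rewrite (ACl ((1*6)*2*4*7*3*5))%AC /= addrN add0r.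
  by rewrite ?addrA.
have -> : 1 + c * z - c = 0 by rewrite /c; field.
by rewrite scale0r add0r /c; congr (_ *: _); field.
Qed.
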